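(* Let $G_1=(V,E_1)$, $G_2=(V,E_2)$, $G_3=(V,E_3)$ be simple graphs on a common vertex set $V$ with $|V|=m$ and $E_1\cap E_2=E_1\cap E_3=\emptyset$. Let $\delta_1$ be the minimum degree of $G_1$, and $\Delta_2,\Delta_3$ the maximum degrees of $G_2,G_3$. Let $\ell\geq 2$ be an integer. Suppose $$m\cdot\frac{3\ell-1}{3\ell}\leq \delta_1 \qquad\text{and}\qquad \Delta_2\Delta_3\leq \frac{m-3}{15\ell^2}.$$ Then there are $\lfloor m/\ell\rfloor$ pairwise vertex-disjoint copies of $K_\ell$ in $G_1$ such that no two of them form an alternating-$(\ell,2,\ell,2)$-bag with $G_2$ and $G_3$.
   Context: Two vertex-disjoint copies $A_1,A_2$ of $K_\ell$ in $G_1$ form an alternating-$(\ell,2,\ell,2)$-bag with $G_2$ and $G_3$ if there exist two vertex-disjoint edges $e_2\in E_2$ and $e_3\in E_3$ each of which joins a vertex of $A_1$ to a vertex of $A_2$. *)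

(* Defs.v *)
From mathcomp Require Import all_boot all_order all_algebra.
Set Implicit Arguments. Unset Strict Implicit. Unset Printing Implicit Defensive.

Definition simple_graph (V : finType) (e : rel V) : Prop :=
  (forall x y, e x y = e y x) /\ (forall x, ~~ e x x).

Definition edge_disjoint (V : finType) (e f : rel V) : Prop :=
  forall x y, e x y -> ~~ f x y.

Definition deg (V : finType) (e : rel V) (v : V) : nat := #|[set u | e v u]|.

(* minimum degree (#|V| is used as neutral element; it exceeds every degree) *)
Definition mindeg (V : finType) (e : rel V) : nat :=
  \big[minn/#|V|]_(v : V) deg e v.

Definition maxdeg (V : finType) (e : rel V) : nat :=
  \max_(v : V) deg e v.

Definition is_Kl_copy (V : finType) (e : rel V) (l : nat) (A : {set V}) : Prop :=
  #|A| = l /\ (forall x y, x \in A -> y \in A -> x != y -> e x y).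

Definition alt_bag (V : finType) (e2 e3 : rel V) (A1 A2 : {set V}) : Prop :=
  exists x2 y2 x3 y3,
    [/\ e2 x2 y2 /\ (x2 \in A1) /\ (y2 \in A2),
        e3 x3 y3 /\ (x3 \in A1) /\ (y3 \in A2) &
        [disjoint [set x2; y2] & [set x3; y3]]].

(* Main.v *)
Require Import Defs.
From mathcomp Require Import all_boot all_order all_algebra.
Import Order.TTheory GRing.Theory Num.Theory.
From mathcomp Require Import zify.
Set Implicit Arguments. Unset Strict Implicit. Unset Printing Implicit Defensive.

Lemma leq_card_bigcup (I T : finType) (P : pred I) (F : I -> {set T}) :
  #|\bigcup_(i | P i) F i| <= \sum_(i | P i) #|F i|.
Proof.
apply: (big_ind2 (fun (A : {set T}) n => #|A| <= n)).
- by rewrite cards0.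
- move=> A1 n1 A2 n2 h1 h2; apply: leq_trans (leq_card_setU _ _) _.
  by rewrite leq_add.
- by [].
Qed.

Lemma card_bigcup_disj (I T : finType) (P : pred I) (F : I -> {set T}) :
  (forall i j, i != j -> [disjoint F i & F j]) ->
  #|\bigcup_(i | P i) F i| = \sum_(i | P i) #|F i|.
Proof.
move=> Hd.
elim: {P}_.+1 {-2}P (ltnSn #|P|) => // n IH P HP.
case: (pickP P) => [i Pi | P0]; last first.
  by rewrite !big_pred0 ?cards0.
rewrite (bigD1 i Pi) (bigD1 i Pi) /= cardsU.
have -> : F i :&: \bigcup_(j | P j && (j != i)) F j = set0.
  apply: disjoint_setI0; apply: bigcup_disjoint => j /andP [_ ji].
  by apply: Hd; rewrite eq_sym.
rewrite cards0 subn0 (IH [pred j | P j && (j != i)]) //.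
rewrite -ltnS; apply: leq_trans HP; apply: proper_card.
apply/properP; split; first by apply/subsetP => j /andP[].
by exists i => //=; rewrite inE /= eqxx andbF.
Qed.

Definition nb (V : finType) (e : rel V) (S : {set V}) : {set V} :=
  \bigcup_(s in S) [set u | e s u].
Definition nonnb (V : finType) (e : rel V) (S : {set V}) : {set V} :=
  \bigcup_(s in S) [set u | (s != u) && ~~ e s u].
Definition cls (V : finType) (k : nat) (A : 'I_k -> {set V}) (S : {set V}) : {set 'I_k} :=
  [set i | ~~ [disjoint A i & S]].
Definition Ucls (V : finType) (k : nat) (A : 'I_k -> {set V}) (S : {set V}) : {set V} :=
  \bigcup_(i in cls A S) A i.

Lemma nbP (V : finType) (e : rel V) (S : {set V}) u :
  reflect (exists2 s, s \in S & e s u) (u \in nb e S).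
Proof.
apply: (iffP bigcupP) => [[s sS]|[s sS esu]]; first by rewrite inE; exists s.
by exists s; rewrite ?inE.
Qed.

Lemma nonnbP (V : finType) (e : rel V) (S : {set V}) u :
  reflect (exists2 s, s \in S & (s != u) && ~~ e s u) (u \in nonnb e S).
Proof.
apply: (iffP bigcupP) => [[s sS]|[s sS esu]]; first by rewrite inE; exists s.
by exists s; rewrite ?inE.
Qed.

Lemma sum_const_le (I : finType) (P : pred I) (f : I -> nat) d :
  (forall i, P i -> f i <= d) -> \sum_(i | P i) f i <= #|P| * d.
Proof.
move=> h; rewrite -sum1_card big_distrl /=; apply: leq_sum => i Pi.
by rewrite mul1n h.
Qed.

Lemma card_nb (V : finType) (e : rel V) (S : {set V}) d :
  (forall x, #|[set u | e x u]| <= d) -> #|nb e S| <= #|S| * d.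
Proof.
move=> h; apply: leq_trans (leq_card_bigcup _ _) _.
exact: sum_const_le.
Qed.

Lemma card_nonnb (V : finType) (e : rel V) (S : {set V}) d :
  (forall x, #|[set u | (x != u) && ~~ e x u]| <= d) -> #|nonnb e S| <= #|S| * d.
Proof.
move=> h; apply: leq_trans (leq_card_bigcup _ _) _.
exact: sum_const_le.
Qed.

Lemma clsP (V : finType) (k : nat) (A : 'I_k -> {set V}) (S : {set V}) i :
  reflect (exists2 x, x \in A i & x \in S) (i \in cls A S).
Proof.
rewrite inE; apply: (iffP idP) => [|[x xA xS]].
  by case/existsP => x /andP [xA xS]; exists x.
by apply/negP => /disjointFr /(_ xA); rewrite xS.
Qed.

Lemma card_cls (V : finType) (k : nat) (A : 'I_k -> {set V}) (S : {set V}) :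
  (forall i j, i != j -> [disjoint A i & A j]) -> #|cls A S| <= #|S|.
Proof.
move=> Hd.
have Heq : #|\bigcup_(i in cls A S) (A i :&: S)| = \sum_(i in cls A S) #|A i :&: S|.
  by apply: card_bigcup_disj => i j ij; apply: disjointW (Hd i j ij); apply: subsetIl.
have : #|\bigcup_(i in cls A S) (A i :&: S)| <= #|S|.
  by apply: subset_leq_card; apply/bigcupsP => i _; apply: subsetIr.
rewrite Heq => h; apply: leq_trans h; rewrite -sum1_card; apply: leq_sum => i.
by case/clsP => x xA xS; rewrite card_gt0; apply/set0Pn; exists x; rewrite inE xA.
Qed.

Lemma card_Ucls (V : finType) (k : nat) (A : 'I_k -> {set V}) (S : {set V}) l :
  (forall i j, i != j -> [disjoint A i & A j]) -> (forall i, #|A i| <= l) ->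
  #|Ucls A S| <= #|S| * l.
Proof.
move=> Hd Hl; apply: leq_trans (leq_card_bigcup _ _) _.
apply: (@leq_trans (#|cls A S| * l)); first by apply: sum_const_le => i _; exact: Hl.
by rewrite leq_mul2r card_cls ?orbT.
Qed.

Lemma sub_Ucls (V : finType) (k : nat) (A : 'I_k -> {set V}) (S : {set V}) i x :
  x \in A i -> x \in S -> A i \subset Ucls A S.
Proof. by move=> xA xS; apply: bigcup_sup; apply/clsP; exists x. Qed.

Lemma alt_bag_sym (V : finType) (e2 e3 : rel V) (A B : {set V}) :
  simple_graph e2 -> simple_graph e3 -> alt_bag e2 e3 A B -> alt_bag e2 e3 B A.
Proof.
move=> [s2 _] [s3 _] [x2 [y2 [x3 [y3 [[h2 [a2 b2]] [h3 [a3 b3]] hd]]]]].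
exists y2, x2, y3, x3; split.
- by rewrite s2.
- by rewrite s3.
- by rewrite [[set y2; x2]]setUC [[set y3; x3]]setUC.
Qed.

Lemma alt_bag_sub (V : finType) (e2 e3 : rel V) (A B A' B' : {set V}) :
  A' \subset A -> B' \subset B -> alt_bag e2 e3 A' B' -> alt_bag e2 e3 A B.
Proof.
move=> /subsetP sA /subsetP sB [x2 [y2 [x3 [y3 [[h2 [a2 b2]] [h3 [a3 b3]] hd]]]]].
by exists x2, y2, x3, y3; split=> //; split=> //; split; auto.
Qed.

Lemma alt_bag_add (V : finType) (e2 e3 : rel V) (Y Z : {set V}) u :
  ~ alt_bag e2 e3 Y Z ->
  (forall z, z \in Z -> e2 u z -> forall y z', y \in Y -> z' \in Z -> ~~ e3 y z') ->
  (forall z, z \in Z -> e3 u z -> forall y z', y \in Y -> z' \in Z -> ~~ e2 y z') ->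
  ~ alt_bag e2 e3 (u |: Y) Z.
Proof.
move=> hY h2u h3u [x2 [y2 [x3 [y3 [[h2 [a2 b2]] [h3 [a3 b3]] hd]]]]].
have nx : x2 != x3.
  apply/eqP => ex; move: hd; rewrite ex => hd.
  by move: (disjointFr hd (set21 x3 y2)); rewrite set21.
move: a2 a3; rewrite !inE => a2 a3.
case/orP: a2 => [/eqP ex2|a2].
  case/orP: a3 => [/eqP ex3|a3]; first by move: nx; rewrite ex2 ex3 eqxx.
  by rewrite ex2 in h2; move: (h2u y2 b2 h2 x3 y3 a3 b3); rewrite h3.
case/orP: a3 => [/eqP ex3|a3].
  by rewrite ex3 in h3; move: (h3u y3 b3 h3 x2 y2 a2 b2); rewrite h2.
by apply: hY; exists x2, y2, x3, y3.
Qed.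

Lemma nbag_sym (V : finType) (e2 e3 : rel V) (A B : {set V}) :
  simple_graph e2 -> simple_graph e3 -> ~ alt_bag e2 e3 A B -> ~ alt_bag e2 e3 B A.
Proof. by move=> s2 s3 h /(alt_bag_sym s2 s3). Qed.

Lemma nbag_sub (V : finType) (e2 e3 : rel V) (A B A' B' : {set V}) :
  ~ alt_bag e2 e3 A B -> A' \subset A -> B' \subset B -> ~ alt_bag e2 e3 A' B'.
Proof. by move=> h sA sB /(alt_bag_sub sA sB). Qed.

Definition clique (V : finType) (e : rel V) (S : {set V}) :=
  forall x y, x \in S -> y \in S -> x != y -> e x y.

Definition goodF (V : finType) (e1 e2 e3 : rel V) (l k : nat) (A : 'I_k -> {set V}) :=
  [/\ forall i, clique e1 (A i) /\ #|A i| <= l,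
      forall i j, i != j -> [disjoint A i & A j] &
      forall i j, i != j -> ~ alt_bag e2 e3 (A i) (A j)].

Lemma pair_red (k : nat) (P : 'I_k -> 'I_k -> Prop) (S : {set 'I_k}) :
  (forall i j, P i j -> P j i) ->
  (forall i j, i != j -> i \in S -> P i j) ->
  (forall i j, i != j -> i \notin S -> j \notin S -> P i j) ->
  forall i j, i != j -> P i j.
Proof.
move=> hs h1 h2 i j ij.
case iS: (i \in S); first exact: h1.
case jS: (j \in S); first by apply: hs; apply: h1 => //; rewrite eq_sym.
by apply: h2; rewrite ?iS ?jS.
Qed.

Lemma sum_upd1 (k : nat) (f g : 'I_k -> nat) C :
  g C = (f C).+1 -> (forall i, i != C -> g i = f i) ->
  \sum_i g i = (\sum_i f i).+1.
Proof.
move=> hC ho; rewrite (bigD1 C) //= [in RHS](bigD1 C) //= hC addSn.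
by congr (_.+1 + _); apply: eq_bigr => i /ho.
Qed.

Lemma disjU1 (T : finType) (x : T) (A B : {set T}) :
  [disjoint x |: A & B] = (x \notin B) && [disjoint A & B].
Proof. by rewrite !disjoints_subset subUset sub1set inE. Qed.

Lemma step (V : finType) (e1 e2 e3 : rel V) (l k t d2 d3 : nat) (A : 'I_k -> {set V}) :
  simple_graph e1 -> simple_graph e2 -> simple_graph e3 ->
  edge_disjoint e1 e2 -> edge_disjoint e1 e3 ->
  (forall x, #|[set u | (x != u) && ~~ e1 x u]| <= t) ->
  (forall x, #|[set u | e2 x u]| <= d2) ->
  (forall x, #|[set u | e3 x u]| <= d3) ->
  2 * l * t + 4 * l * l * (d2 * d3) + d2 + d3 < l * k ->
  k * l <= #|V| ->
  goodF e1 e2 e3 l A -> \sum_i #|A i| < k * l ->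
  exists A' : 'I_k -> {set V}, goodF e1 e2 e3 l A' /\ \sum_i #|A' i| = (\sum_i #|A i|).+1.
Proof.
move=> s1 s2 s3 ed2 ed3 Ht Hd2 Hd3 Hnum Hk [Gc Gd Gb] Hs.
have [v vn] : exists v, v \notin \bigcup_i A i.
  case: (pickP [pred v | v \notin \bigcup_i A i]) => [v vn|h]; first by exists v.
  have : #|V| <= #|\bigcup_i A i|.
    rewrite -cardsT; apply: subset_leq_card; apply/subsetP => x _.
    by move: (h x) => /= /negbFE.
  move=> h2; have := leq_trans h2 (leq_card_bigcup _ _).
  by move=> h3; have := leq_trans (leq_ltn_trans h3 Hs) Hk; rewrite ltnn.
have vA : forall i, v \notin A i.
  by move=> i; apply: contra vn => vi; apply/bigcupP; exists i.
have [C HC] : exists C, #|A C| < l.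
  case: (pickP [pred i | #|A i| < l]) => [i hi|h]; first by exists i.
  have : \sum_(i < k) l <= \sum_i #|A i|.
    by apply: leq_sum => i _; move: (h i) => /= /negbT; rewrite -leqNgt.
  by rewrite sum_nat_const card_ord leqNgt Hs.
pose Bad := cls A (nonnb e1 [set v]) :|: cls A (nb e3 (Ucls A (nb e2 [set v])))
            :|: cls A (nb e2 (Ucls A (nb e3 [set v]))).
have Hl : forall i, #|A i| <= l by move=> i; case: (Gc i).
have cBad : #|Bad| <= t + l * d2 * d3 + l * d3 * d2.
  have c1 : #|cls A (nonnb e1 [set v])| <= t.
    apply: leq_trans (card_cls _ Gd) _.
    by apply: leq_trans (card_nonnb _ Ht) _; rewrite cards1 mul1n.
  have c2 : forall (ea eb : rel V) da db,
      (forall x, #|[set u | ea x u]| <= da) -> (forall x, #|[set u | eb x u]| <= db) ->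
      #|cls A (nb eb (Ucls A (nb ea [set v])))| <= l * da * db.
    move=> ea eb da db ha hb.
    apply: leq_trans (card_cls _ Gd) _.
    apply: leq_trans (card_nb _ hb) _; rewrite leq_mul2r; apply/orP; right.
    apply: leq_trans (card_Ucls _ Gd Hl) _.
    rewrite mulnC leq_mul2l; apply/orP; right.
    by apply: leq_trans (card_nb _ ha) _; rewrite cards1 mul1n.
  apply: leq_trans (leq_card_setU _ _) _; rewrite leq_add ?c2 //.
  by apply: leq_trans (leq_card_setU _ _) _; rewrite leq_add ?c2.
have fits : forall i, i \notin Bad ->
    (forall x, x \in A i -> e1 v x) /\ (forall j, j != i -> ~ alt_bag e2 e3 (v |: A i) (A j)).
  move=> i iB; split.
    move=> x xA; apply/negPn/negP => nx; move: iB; rewrite !in_setU !negb_or => /andP [/andP [h _] _].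
    move/negP: h; apply; apply/clsP; exists x => //; apply/nonnbP; exists v; rewrite ?inE //.
    by rewrite nx andbT; apply: contraNneq (vA i) => ->.
  move=> j ji; apply: alt_bag_add; first by apply: Gb; rewrite eq_sym.
  - move=> z zj e2vz y z' yi z'j; apply/negP => e3yz.
    move: iB; rewrite !in_setU !negb_or => /andP [/andP [_ h] _]; move/negP: h; apply.
    apply/clsP; exists y => //; apply/nbP; exists z'; last by case: s3 => ->.
    apply: (subsetP (sub_Ucls zj _)) z'j; apply/nbP; exists v; rewrite ?inE //.
  - move=> z zj e3vz y z' yi z'j; apply/negP => e2yz.
    move: iB; rewrite !in_setU !negb_or => /andP [_ h]; move/negP: h; apply.
    apply/clsP; exists y => //; apply/nbP; exists z'; last by case: s2 => ->.
    apply: (subsetP (sub_Ucls zj _)) z'j; apply/nbP; exists v; rewrite ?inE //.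
case: (pickP [pred i | (i \notin Bad) && (#|A i| < l)]) => [i /andP [iB il] | hfull].
  have [fv fb] := fits i iB.
  exists (fun j => if j == i then v |: A i else A j); split; last first.
    apply: (sum_upd1 (C := i)) => [|j /negbTE ->]; last by [].
    by rewrite eqxx cardsU1 vA add1n.
  split.
  - move=> j; case: eqP => [_|_]; last exact: Gc.
    split; last by rewrite cardsU1 vA add1n.
    move=> x y; rewrite !in_setU1 => /orP [/eqP ->|xA] /orP [/eqP ->|yA] xy.
    + by rewrite eqxx in xy.
    + exact: fv.
    + by case: s1 => -> _; apply: fv.
    + by case: (Gc i) => hc _; apply: hc.
  - apply: (pair_red (S := [set i])).
    + by move=> a b; rewrite disjoint_sym.
    + move=> a b ab; rewrite inE => /eqP ea; subst a; rewrite eqxx eq_sym (negbTE ab).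
      by rewrite disjU1 vA Gd.
    + by move=> a b ab; rewrite !inE => /negbTE -> /negbTE ->; exact: Gd.
  - apply: (pair_red (S := [set i])).
    + by move=> a b; apply: nbag_sym.
    + move=> a b ab; rewrite inE => /eqP ea; subst a; rewrite eqxx eq_sym (negbTE ab).
      by apply: fb; rewrite eq_sym.
    + by move=> a b ab; rewrite !inE => /negbTE -> /negbTE ->; exact: Gb.
have notfull : forall i, i \notin Bad -> #|A i| = l.
  move=> i iB; apply/eqP; rewrite eqn_leq Hl /=; move: (hfull i) => /= /negbT.
  by rewrite iB /= -leqNgt.
have CB : C \in Bad.
  by apply/negPn/negP => /notfull h; move: HC; rewrite h ltnn.
pose Fw := nonnb e1 (A C) :|: nb e2 (Ucls A (nb e3 (A C))) :|: nb e3 (Ucls A (nb e2 (A C)))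
           :|: nb e2 [set v] :|: nb e3 [set v].
have cFw : #|Fw| <= l * t + l * d3 * l * d2 + l * d2 * l * d3 + d2 + d3.
  have c0 : #|nonnb e1 (A C)| <= l * t.
    by apply: leq_trans (card_nonnb _ Ht) _; rewrite leq_mul2r Hl orbT.
  have c2 : forall (ea eb : rel V) da db,
      (forall x, #|[set u | ea x u]| <= da) -> (forall x, #|[set u | eb x u]| <= db) ->
      #|nb eb (Ucls A (nb ea (A C)))| <= l * da * l * db.
    move=> ea eb da db ha hb.
    apply: leq_trans (card_nb _ hb) _; rewrite leq_mul2r; apply/orP; right.
    apply: leq_trans (card_Ucls _ Gd Hl) _.
    rewrite leq_mul2r; apply/orP; right.
    by apply: leq_trans (card_nb _ ha) _; rewrite leq_mul2r Hl orbT.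
  have c3 : forall (ea : rel V) da, (forall x, #|[set u | ea x u]| <= da) ->
      #|nb ea [set v]| <= da.
    by move=> ea da ha; apply: leq_trans (card_nb _ ha) _; rewrite cards1 mul1n.
  apply: leq_trans (leq_card_setU _ _) _; apply: leq_add; last exact: c3.
  apply: leq_trans (leq_card_setU _ _) _; apply: leq_add; last exact: c3.
  apply: leq_trans (leq_card_setU _ _) _; apply: leq_add; last exact: c2.
  apply: leq_trans (leq_card_setU _ _) _; apply: leq_add; last exact: c2.
  exact: c0.
pose Gd' := \bigcup_(i | i \notin Bad) A i.
have cGd : #|Gd'| = #|~: Bad| * l.
  rewrite /Gd' card_bigcup_disj // (eq_bigr (fun _ => l)); last by move=> i /notfull.
  by rewrite sum_nat_const; congr (_ * _); apply: eq_card => i; rewrite inE.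
have cB : #|Bad| + #|~: Bad| = k by rewrite cardsC card_ord.
have [w wG wF] : exists2 w, w \in Gd' & w \notin Fw.
  case: (pickP [pred w | (w \in Gd') && (w \notin Fw)]) => [w /andP [] | h]; first by exists w.
  have : #|Gd'| <= #|Fw|.
    apply: subset_leq_card; apply/subsetP => x xG; move: (h x) => /=; rewrite xG /=.
    by move/negbT/negPn.
  rewrite cGd => hc; exfalso.
  have hb : #|~: Bad| * l <= l * t + 2 * l * l * (d2 * d3) + d2 + d3.
    apply: leq_trans hc _; apply: leq_trans cFw _.
    by lia.
  have hbad : #|Bad| * l <= t * l + 2 * l * l * (d2 * d3).
    apply: leq_trans (_ : (t + l * d2 * d3 + l * d3 * d2) * l <= _).
      by rewrite leq_mul2r cBad orbT.
    by rewrite !mulnDl; apply: eq_leq; lia.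
  have : k * l = #|Bad| * l + #|~: Bad| * l by rewrite -mulnDl cB.
  move: Hnum; rewrite [l * k]mulnC; lia.
have [D DB wD] : exists2 D, D \notin Bad & w \in A D.
  by case/bigcupP: wG => D DB wD; exists D.
have DC : D != C by apply: contraNneq DB => ->.
have wC : w \notin A C by rewrite (disjointFr (Gd _ _ DC) wD).
have wv : w != v by apply: contraNneq (vA D) => <-.
have [fv fb] := fits D DB.
have Cw : forall c, c \in A C -> e1 c w.
  move=> c cC; apply/negPn/negP => nc; move: wF; rewrite !in_setU.
  suff -> : w \in nonnb e1 (A C) by [].
  by apply/nonnbP; exists c => //; rewrite nc andbT; apply: contraNneq wC => <-.
have [wF2a wF2b] : w \notin nb e2 (Ucls A (nb e3 (A C))) /\
                                  w \notin nb e3 (Ucls A (nb e2 (A C))).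
  by move: wF; rewrite !in_setU !negb_or => /andP [/andP [/andP [/andP [_ ->] ->] _] _].
have wv2 : ~~ e2 v w /\ ~~ e3 v w.
  move: wF; rewrite !in_setU !negb_or => /andP [/andP [_ h2] h3]; split.
    by apply: contra h2 => e; apply/nbP; exists v; rewrite ?inE.
  by apply: contra h3 => e; apply/nbP; exists v; rewrite ?inE.
pose C' := w |: A C; pose D' := v |: (A D :\ w).
have D'sub : D' \subset v |: A D by apply: setUS; apply: subD1set.
have CD_disj : [disjoint C' & D'].
  rewrite disjU1 !inE negb_or wv negb_and eqxx /=.
  rewrite disjoint_sym disjU1 vA /=; apply: disjointWl (subD1set _ _) _.
  by apply: Gd.
have Cj_disj : forall j, j != C -> j != D -> [disjoint C' & A j].
  move=> j jC jD; rewrite disjU1 (disjointFr (Gd D j _) wD) ?Gd //; first by rewrite eq_sym.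
  by rewrite eq_sym.
have Dj_disj : forall j, j != D -> [disjoint D' & A j].
  move=> j jD; rewrite disjU1 vA /=; apply: disjointWl (subD1set _ _) _.
  by apply: Gd; rewrite eq_sym.
have CD_bag : ~ alt_bag e2 e3 C' D'.
  apply: alt_bag_add.
  - apply: nbag_sym => //; apply: nbag_sub (fb C _) D'sub (subxx _); by rewrite eq_sym.
  - move=> z; rewrite !inE => /orP [/eqP -> | /andP [zw zD]] e2wz; exfalso.
      by case: wv2 => h _; case: s2 => sy _; move: h; rewrite sy e2wz.
    case: (Gc D) => hc _; have h : e1 w z by apply: hc => //; rewrite eq_sym.
    by move: (ed2 _ _ h); rewrite e2wz.
  - move=> z; rewrite !inE => /orP [/eqP -> | /andP [zw zD]] e3wz; exfalso.
      by case: wv2 => _ h; case: s3 => sy _; move: h; rewrite sy e3wz.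
    case: (Gc D) => hc _; have h : e1 w z by apply: hc => //; rewrite eq_sym.
    by move: (ed3 _ _ h); rewrite e3wz.
have Cj_bag : forall j, j != C -> j != D -> ~ alt_bag e2 e3 C' (A j).
  move=> j jC jD; apply: alt_bag_add; first by apply: Gb; rewrite eq_sym.
  - move=> z zj e2wz y z' yC z'j; apply/negP => e3yz; move/negP: wF2a; apply.
    apply/nbP; exists z; last by case: s2 => ->.
    apply: (subsetP (sub_Ucls z'j _)) zj; apply/nbP; exists y => //.
  - move=> z zj e3wz y z' yC z'j; apply/negP => e2yz; move/negP: wF2b; apply.
    apply/nbP; exists z; last by case: s3 => ->.
    apply: (subsetP (sub_Ucls z'j _)) zj; apply/nbP; exists y => //.
have Dj_bag : forall j, j != D -> ~ alt_bag e2 e3 D' (A j).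
  by move=> j jD; apply: nbag_sub (fb j jD) D'sub (subxx _).
have vD' : v \notin A D :\ w by rewrite !inE (negbTE (vA D)) andbF.
have cD' : #|D'| = #|A D| by rewrite cardsU1 vD' (cardsD1 w (A D)) wD.
have cC' : #|C'| = (#|A C|).+1 by rewrite cardsU1 wC.
exists (fun j => if j == C then C' else if j == D then D' else A j); split; last first.
  apply: (sum_upd1 (C := C)) => [|j /negbTE ->]; first by rewrite eqxx.
  by case: eqP => [->|].
have hsym : forall (P : {set V} -> {set V} -> Prop), (forall X Y, P X Y -> P Y X) ->
   P C' D' -> (forall j, j != C -> j != D -> P C' (A j)) ->
   (forall j, j != D -> P D' (A j)) -> (forall i j, i != j -> P (A i) (A j)) ->
   forall i j, i != j ->
   P (if i == C then C' else if i == D then D' else A i)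
     (if j == C then C' else if j == D then D' else A j).
  move=> P Ps hCD hCj hDj hij.
  apply: (pair_red (S := [set C; D])).
  - by move=> a b; apply: Ps.
  - move=> a b ab; rewrite !inE => /orP [/eqP ea | /eqP ea]; subst a.
      rewrite eqxx eq_sym (negbTE ab); case: eqP => [_|/eqP bD] /=; first exact: hCD.
      by apply: hCj => //; rewrite eq_sym.
    rewrite (negbTE DC) eqxx eq_sym.
    case: eqP => [_|/eqP bC] /=; first exact: Ps.
    by rewrite eq_sym (negbTE ab); apply: hDj; rewrite eq_sym.
  - move=> a b ab; rewrite !inE !negb_or => /andP [/negbTE -> /negbTE ->].
    by move=> /andP [/negbTE -> /negbTE ->]; exact: hij.
split.
- move=> j; case: eqP => [_|_].
    split; last by rewrite cC' HC.
    move=> x y; rewrite !in_setU1 => /orP [/eqP ->|xA] /orP [/eqP ->|yA] xy.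
    + by rewrite eqxx in xy.
    + by case: s1 => -> _; apply: Cw.
    + exact: Cw.
    + by case: (Gc C) => hc _; apply: hc.
  case: eqP => [_|_]; last exact: Gc.
  split; last by rewrite cD' Hl.
  have [hc _] := Gc D.
  move=> x y; rewrite !in_setU1 => /orP [/eqP ->|/setD1P [_ xA]] /orP [/eqP ->|/setD1P [_ yA]] xy.
  + by rewrite eqxx in xy.
  + exact: fv.
  + by case: s1 => -> _; apply: fv.
  + exact: hc.
- apply: (hsym (fun X Y => [disjoint X & Y])); [ by move=> X Y; rewrite disjoint_sym
     | exact: CD_disj | exact: Cj_disj | exact: Dj_disj | exact: Gd ].
- apply: (hsym (fun X Y => ~ alt_bag e2 e3 X Y)); [ by move=> X Y; apply: nbag_sym
     | exact: CD_bag | exact: Cj_bag | exact: Dj_bag | exact: Gb ].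
Qed.

Lemma build (V : finType) (e1 e2 e3 : rel V) (l k t d2 d3 : nat) :
  simple_graph e1 -> simple_graph e2 -> simple_graph e3 ->
  edge_disjoint e1 e2 -> edge_disjoint e1 e3 ->
  (forall x, #|[set u | (x != u) && ~~ e1 x u]| <= t) ->
  (forall x, #|[set u | e2 x u]| <= d2) ->
  (forall x, #|[set u | e3 x u]| <= d3) ->
  2 * l * t + 4 * l * l * (d2 * d3) + d2 + d3 < l * k ->
  k * l <= #|V| ->
  exists A : 'I_k -> {set V},
    [/\ forall i, is_Kl_copy e1 l (A i),
        forall i j, i != j -> [disjoint A i & A j] &
        forall i j, i != j -> ~ alt_bag e2 e3 (A i) (A j)].
Proof.
move=> s1 s2 s3 ed2 ed3 Ht Hd2 Hd3 Hnum Hk.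
have H : forall n, n <= k * l -> exists A : 'I_k -> {set V},
    goodF e1 e2 e3 l A /\ \sum_i #|A i| = n.
  elim=> [_|n IH hn].
    exists (fun _ => set0); split; last by rewrite big1 // => i _; rewrite cards0.
    split.
    - by move=> i; split; [move=> x y; rewrite inE | rewrite cards0].
    - by move=> i j _; apply/pred0P => x; rewrite /= inE.
    - by move=> i j _ [x2 [y2 [x3 [y3 [[_ [a _]] _ _]]]]]; rewrite inE in a.
  have [A [GA SA]] := IH (ltnW hn).
  have hs : \sum_i #|A i| < k * l by rewrite SA.
  have [A' [GA' SA']] := step s1 s2 s3 ed2 ed3 Ht Hd2 Hd3 Hnum Hk GA hs.
  by exists A'; split=> //; rewrite SA' SA.
have [A [[Gc Gd Gb] SA]] := H _ (leqnn _).
exists A; split=> // i; have [hc hl] := Gc i; split=> //.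
apply/eqP; rewrite eqn_leq hl /= leqNgt; apply/negP => hi.
have : \sum_i #|A i| < k * l.
  rewrite (bigD1 i) //=.
  have : \sum_(j | j != i) #|A j| <= \sum_(j | j != i) l by apply: leq_sum => j _; case: (Gc j).
  rewrite sum_nat_const cardC1 card_ord => h.
  have k0 : 0 < k by apply: leq_ltn_trans (ltn_ord i).
  have lk : l <= k * l by rewrite leq_pmull.
  rewrite -subn1 mulnBl mul1n in h.
  by rewrite -addSn; apply: leq_trans (leq_add hi h) _; rewrite subnKC.
by rewrite SA ltnn.
Qed.

Lemma mindeg_le (V : finType) (e : rel V) v : mindeg e <= deg e v.
Proof.
rewrite /mindeg; have : v \in index_enum V by rewrite mem_index_enum.
elim: (index_enum V) => [//|a r IH]; rewrite inE big_cons.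
case/orP => [/eqP ->|vr]; first exact: geq_minl.
by apply: leq_trans (geq_minr _ _) (IH vr).
Qed.

Lemma nonnb_card (V : finType) (e : rel V) x :
  simple_graph e -> #|[set u | (x != u) && ~~ e x u]| + deg e x + 1 <= #|V|.
Proof.
move=> [_ irr].
have hx : x \notin [set u | e x u] by rewrite inE irr.
have sub : [set u | (x != u) && ~~ e x u] \subset ~: (x |: [set u | e x u]).
  by apply/subsetP => u; rewrite !inE negb_or eq_sym => /andP [-> ->].
have := cardsC (x |: [set u | e x u]); rewrite cardsU1 hx /deg => h.
have := subset_leq_card sub; lia.
Qed.

Lemma no_edge_nbag (V : finType) (e2 e3 : rel V) (A B : {set V}) :
  (forall x y, ~~ e2 x y) \/ (forall x y, ~~ e3 x y) -> ~ alt_bag e2 e3 A B.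
Proof.
move=> [h|h] [x2 [y2 [x3 [y3 [[h2 _] [h3 _] _]]]]].
  by move: (h x2 y2); rewrite h2.
by move: (h x3 y3); rewrite h3.
Qed.

Lemma maxdeg0 (V : finType) (e : rel V) : maxdeg e = 0 -> forall x y, ~~ e x y.
Proof.
move=> h x y; apply/negP => exy.
have := @leq_bigmax V (fun v => deg e v) x; rewrite -/(maxdeg e) h leqn0 /deg cards_eq0.
by move/eqP/setP/(_ y); rewrite !inE exy.
Qed.

Open Scope ring_scope.
Import GRing.Theory Num.Theory.

Lemma num1 (m l d : nat) : (1 <= l)%N ->
  ((m%:R : rat) * ((3 * l)%:R - 1) / (3 * l)%:R <= d%:R) -> (m * (3 * l - 1) <= d * (3 * l))%N.
Proof.
move=> l1 h.
have l3 : (0 < 3 * l)%N by rewrite muln_gt0.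
rewrite ler_pdivrMr ?ltr0n // in h.
have e : ((3 * l)%:R - 1 : rat) = (3 * l - 1)%:R by rewrite natrB.
by rewrite e -!natrM ler_nat in h.
Qed.

Lemma num2 (m l p : nat) : (1 <= l)%N ->
  (p%:R <= ((m%:R : rat) - 3) / (15 * l ^ 2)%:R) -> (p * (15 * l ^ 2) + 3 <= m)%N.
Proof.
move=> l1 h.
have l3 : (0 < 15 * l ^ 2)%N by rewrite muln_gt0 expn_gt0 l1.
rewrite ler_pdivlMr ?ltr0n // lerBrDr in h.
by rewrite -natrM -(natrD _ _ 3) ler_nat in h.
Qed.

Close Scope ring_scope.

Theorem theorem3p1 (V : finType) (e1 e2 e3 : rel V) (l : nat) :
  simple_graph e1 -> simple_graph e2 -> simple_graph e3 ->
  edge_disjoint e1 e2 -> edge_disjoint e1 e3 ->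
  (2 <= l)%N ->
  ((#|V|%:R : rat) * ((3 * l)%:R - 1) / (3 * l)%:R <= (mindeg e1)%:R)%R ->
  ((maxdeg e2 * maxdeg e3)%:R <= ((#|V|%:R : rat) - 3) / (15 * l ^ 2)%:R)%R ->
  exists A : 'I_(#|V| %/ l) -> {set V},
    [/\ forall i, is_Kl_copy e1 l (A i),
        forall i j, i != j -> [disjoint A i & A j] &
        forall i j, i != j -> ~ alt_bag e2 e3 (A i) (A j)].
Proof.
move=> s1 s2 s3 ed2 ed3 l2 h1 h2.
have [k0|kpos] := posnP (#|V| %/ l).
  by exists (fun _ => set0); split => i; move: (ltn_ord i); rewrite {2}k0.
have l1 : (1 <= l)%N by apply: leq_trans l2.
have H1 := num1 l1 h1.
have H2 := num2 l1 h2.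
have mpos : (0 < #|V|)%N.
  by move: kpos; rewrite divn_gt0 ?(leq_trans _ l2) //; apply: leq_trans.
have [v0 _] : exists v0 : V, true.
  by case: (pickP (fun _ : V => true)) => [v _|h]; [exists v | move: mpos; rewrite -cardsT cardsE /= eq_card0].
have hd0 := nonnb_card v0 s1; have hm0 := mindeg_le e1 v0.
set m := #|V| in H1 H2 mpos hd0 kpos *.
set dl := mindeg e1 in H1 hm0 *.
set t := (m - 1 - dl)%N.
have Ht : forall x, (#|[set u | (x != u) && ~~ e1 x u]| <= t)%N.
  by move=> x; have := nonnb_card x s1; have := mindeg_le e1 x; rewrite /t -/dl -/m; lia.
have F1 : (3 * (l * t) + 3 * l <= m)%N by rewrite /t; nia.
have Hk : (m %/ l * l <= m)%N by apply: leq_trunc_div.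
have Hr : (m < m %/ l * l + l)%N.
  by rewrite {1}(divn_eq m l) ltn_add2l ltn_mod (leq_trans _ l2).
set k := m %/ l in kpos Hk Hr *.
have Hd2 : forall x, (#|[set u | e2 x u]| <= maxdeg e2)%N.
  by move=> x; apply: (@leq_bigmax V (fun v => deg e2 v) x).
have Hd3 : forall x, (#|[set u | e3 x u]| <= maxdeg e3)%N.
  by move=> x; apply: (@leq_bigmax V (fun v => deg e3 v) x).
have degen : (forall x y, ~~ e2 x y) \/ (forall x y, ~~ e3 x y) ->
  exists A : 'I_k -> {set V},
    [/\ forall i, is_Kl_copy e1 l (A i),
        forall i j, i != j -> [disjoint A i & A j] &
        forall i j, i != j -> ~ alt_bag e2 e3 (A i) (A j)].
  move=> hno.
  pose e0 : rel V := fun _ _ => false.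
  have se0 : simple_graph e0 by [].
  have ed0 : edge_disjoint e1 e0 by [].
  have Hd0 : forall x, (#|[set u | e0 x u]| <= 0)%N.
    by move=> x; rewrite leqn0 cards_eq0; apply/eqP/setP => u; rewrite !inE.
  have Hnum : (2 * l * t + 4 * l * l * (0 * 0) + 0 + 0 < l * k)%N.
    by rewrite [(l * k)%N]mulnC; lia.
  have [A [hA1 hA2 _]] := build s1 se0 se0 ed0 ed0 Ht Hd0 Hd0 Hnum Hk.
  by exists A; split => // i j _; apply: no_edge_nbag.
have [/eqP d20|d2p] := posnP (maxdeg e2); last have [/eqP d30|d3p] := posnP (maxdeg e3).
- by apply: degen; left; apply: maxdeg0; apply/eqP.
- by apply: degen; right; apply: maxdeg0; apply/eqP.
- set d2 := maxdeg e2 in H2 Hd2 d2p *; set d3 := maxdeg e3 in H2 Hd3 d3p *.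
  have F3 : (d2 + d3 <= d2 * d3 + 1)%N by nia.
  have F2 : (15 * (l * l * (d2 * d3)) + 3 <= m)%N by move: H2; rewrite -mulnn; nia.
  have F4 : (4 * (d2 * d3) <= l * l * (d2 * d3))%N.
    by rewrite leq_mul2r; apply/orP; right; apply: (@leq_mul 2 2).
  have Hnum : (2 * l * t + 4 * l * l * (d2 * d3) + d2 + d3 < l * k)%N.
    rewrite [(l * k)%N]mulnC; lia.
  exact: build s1 s2 s3 ed2 ed3 Ht Hd2 Hd3 Hnum Hk.
Qed.
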